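(* Let $(\mathbf M,\mathfrak I)$ be a ranked merge-model and let $\mathfrak C$ be the cleaning of $\mathfrak I$. Then for every positive integer $r$, $\mathrm w_r(\mathbf M,\mathfrak C)\le\mathrm w_r(\mathbf M,\mathfrak I)$.
   Context: Conventions. $\sigma$ is a finite set of binary relation symbols. $(V)_2=\{(u,v)\in V^2:u\ne v\}$. A tree-order is a partial order $\preceq$ with least element (root) such that elements below any element form a chain; maximal elements are leaves; $\pi(x)$ is the parent of non-root $x$; $x\parallel y$ = incomparable. For pairs, $(x,y)\preceq(x',y')$ iff $x\preceq x'$ and $y\preceq y'$; $\prec$ = $\preceq$ and distinct. Merge-models: $\sigma^*=\{\preceq\}\cup\{S_{Z,\alpha}:Z\in\sigma,\alpha\in\{0,1\}\}$, $S_Z=S_{Z,0}\cup S_{Z,1}$, $S=\bigcup_Z S_Z$. A merge-model is a finite $\sigma^*$-structure $\mathbf M$ with: (1) $\preceq$ a tree-order, root $\rho(\mathbf M)$, leaves $V(\mathbf M)$; (2) $S(x,y)\Rightarrow x=y$ or $x\parallel y$; (3) no $(x,y)\prec(x',y')$ with $S(x,y')$ and $S(x',y)$; (4) never both $S_{Z,0}(x,y)$ and $S_{Z,1}(x,y)$; (5) for all $Z$ and $(u,v)\in(V(\mathbf M))_2$ some $(x,y)\preceq(u,v)$ has $S_Z(x,y)$. Interval ranking: map $\mathfrak I$ from the domain to closed real intervals with $x\prec y\Rightarrow\max\mathfrak I(y)<\min\mathfrak I(x)$ and $S(x,y)\Rightarrow\mathfrak I(x)\cap\mathfrak I(y)\ne\emptyset$;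 $(\mathbf M,\mathfrak I)$ is a ranked merge-model. Cleaning: $f(x)=\min\mathfrak I(x)$ if $x$ is not a leaf, $f(x)=\min_{y\in V(\mathbf M)}\min\mathfrak I(y)$ if $x$ is a leaf; $g(x)=|\{f(y):y\in M, f(y)\le f(x)\}|$; $\mathfrak C(\rho(\mathbf M))=[g(\rho(\mathbf M)),g(\rho(\mathbf M))]$, $\mathfrak C(x)=[g(x),g(\pi(x))-1]$ otherwise. Merge-walks: for real $\tau<\min\mathfrak I(\rho(\mathbf M))$, a $\tau$-bounded merge-walk of order $n$ is $(u_0,v_1,u_1,\dots,v_n,u_n,v_{n+1})$ with $u_0$ a leaf; $u_{i-1},v_i$ comparable or equal ($1\le i\le n+1$); $S(v_i,u_i)$ and $\max(\mathfrak I(u_i)\cap\mathfrak I(v_i))\le\tau$ ($1\le i\le n$); $\min\mathfrak I(v_{n+1})\le\tau<\min\mathfrak I(\pi(v_{n+1}))$. $\mathrm{MWReach}_r(v,\tau)$ = set of such $v_{n+1}$ with $u_0=v$, $n\le r$; $\mathrm w_r(\mathbf M,\mathfrak I)=\max_\tau\max_{v\in V(\mathbf M)}|\mathrm{MWReach}_r(v,\tau)|$. *)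

(* Defs.v *)
From HB Require Import structures.
From mathcomp Require Import all_boot all_order all_algebra.
From mathcomp Require Import boolp reals.
Set Implicit Arguments. Unset Strict Implicit. Unset Printing Implicit Defensive.
Import Order.TTheory GRing.Theory Num.Theory.
Local Open Scope ring_scope.

Section MergeModels.
(* T : the (finite) domain of the merge-model; Sig : the finite signature sigma.
   le : the tree-order; S2 Zs a : the relation S_{Zs,a} (a : bool = alpha in {0,1}). *)
Context {T Sig : finType} (le : rel T) (S2 : Sig -> bool -> rel T).

Definition tlt (x y : T) : bool := le x y && (x != y).
Definition incomp (x y : T) : bool := ~~ le x y && ~~ le y x.
Definition is_root (r : T) : Prop := forall y, le r y.
Definition is_leaf (x : T) : Prop := forall y, le x y -> y = x.
Definition is_parent (p x : T) : Prop := tlt p x /\ forall y, tlt y x -> le y p.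
Definition parent_of (x : T) : option T := [pick p | `[< is_parent p x >]].

Definition tree_order : Prop :=
  [/\ reflexive le, antisymmetric le, transitive le,
      exists r, is_root r
    & forall x y z, le y x -> le z x -> le y z \/ le z y].

Definition SZ (Zs : Sig) (x y : T) : bool := S2 Zs false x y || S2 Zs true x y.
Definition S (x y : T) : bool := [exists Zs, SZ Zs x y].

Definition pair_le (a b : T * T) : bool := le a.1 b.1 && le a.2 b.2.
Definition pair_lt (a b : T * T) : bool := pair_le a b && (a != b).

Definition merge_model : Prop :=
  [/\ tree_order,
      (forall x y, S x y -> x = y \/ incomp x y),
      ~ (exists x y x' y', pair_lt (x, y) (x', y') /\ S x y' /\ S x' y),
      (forall Zs x y, ~ (S2 Zs false x y /\ S2 Zs true x y))
    & (forall Zs u v, is_leaf u -> is_leaf v -> u != v ->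
         exists x y, pair_le (x, y) (u, v) /\ SZ Zs x y)].

Context {R : realType}.
(* a closed real interval [a,b] is the pair (a,b), with a <= b *)
Definition interval_ranking (I : T -> R * R) : Prop :=
  [/\ (forall x, (I x).1 <= (I x).2),
      (forall x y, tlt x y -> (I y).2 < (I x).1)
    & (forall x y, S x y -> exists t,
         ((I x).1 <= t <= (I x).2) /\ ((I y).1 <= t <= (I y).2))].

Definition f_clean (I : T -> R * R) (x : T) : R :=
  if `[< is_leaf x >]
  then \big[Num.min/(I x).1]_(y | `[< is_leaf y >]) (I y).1
  else (I x).1.
Definition g_clean (I : T -> R * R) (x : T) : nat :=
  size (undup [seq f_clean I y | y <- enum T & f_clean I y <= f_clean I x]).
Definition cleaning (I : T -> R * R) (x : T) : R * R :=
  match parent_of x with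
  | Some p => ((g_clean I x)%:R, (g_clean I p)%:R - 1)
  | None => ((g_clean I x)%:R, (g_clean I x)%:R)
  end.

(* max of the intersection of two (intersecting) closed intervals *)
Definition capmax (a b : R * R) : R := Num.min a.2 b.2.

(* tau-bounded merge-walk (u_0, v_1, u_1, ..., v_n, u_n, v_{n+1}) of order n;
   only u 0..n and v 1..n+1 are relevant *)
Definition merge_walk (I : T -> R * R) (tau : R) (n : nat) (u v : nat -> T) : Prop :=
  [/\ exists rt, is_root rt /\ tau < (I rt).1,
      is_leaf (u 0%N),
      (forall i, (1 <= i <= n.+1)%N -> le (u i.-1) (v i) || le (v i) (u i.-1)),
      (forall i, (1 <= i <= n)%N -> S (v i) (u i) /\ capmax (I (u i)) (I (v i)) <= tau)
    & (I (v n.+1)).1 <= tau /\ exists p, is_parent p (v n.+1) /\ tau < (I p).1].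

Definition MWReach (r : nat) (I : T -> R * R) (x : T) (tau : R) : {set T} :=
  [set w | `[< exists n u v, (n <= r)%N /\ u 0%N = x /\ merge_walk I tau n u v
                              /\ v n.+1 = w >]].

Definition w_r (r : nat) (I : T -> R * R) : nat :=
  \max_(k < #|T|.+1 | `[< exists tau x, is_leaf x
                            /\ (exists rt, is_root rt /\ tau < (I rt).1)
                            /\ #|MWReach r I x tau| = k >]) k.

End MergeModels.

(* Main.v *)
Require Import Defs.
From HB Require Import structures.
From mathcomp Require Import all_boot all_order all_algebra.
From mathcomp Require Import boolp reals.
Set Implicit Arguments. Unset Strict Implicit. Unset Printing Implicit Defensive.
Import Order.TTheory GRing.Theory Num.Theory.
Local Open Scope ring_scope.

Section Aux.
Variables (R : realType) (T Sig : finType) (le : rel T) (S2 : Sig -> bool -> rel T) (I : T -> R * R).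
Hypothesis MM : merge_model le S2.
Hypothesis IR : interval_ranking le S2 I.

Local Notation f := (f_clean le I).
Local Notation g := (g_clean le I).
Local Notation C := (cleaning le I).

Lemma leR x : le x x.
Proof. by case: MM => [[]]. Qed.
Lemma leA x y : le x y -> le y x -> x = y.
Proof. by case: MM => [[_ H _ _ _]] _ _ _ _ a b; apply: H; rewrite a b. Qed.
Lemma leT x y z : le x y -> le y z -> le x z.
Proof. by case: MM => [[_ _ H _ _]] _ _ _ _ a b; apply: H a b. Qed.
Lemma leChain x y z : le y x -> le z x -> le y z \/ le z y.
Proof. by case: MM => [[_ _ _ _ H]] _ _ _ _; apply: H. Qed.
Lemma rootE : exists rt, is_root le rt.
Proof. by case: MM => [[_ _ _ H _]]. Qed.

Lemma I12 x : (I x).1 <= (I x).2.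
Proof. by case: IR. Qed.
Lemma rankI x y : tlt le x y -> (I y).2 < (I x).1.
Proof. by case: IR => _ H _; apply: H. Qed.
Lemma S_meet x y : S S2 x y -> exists t,
   ((I x).1 <= t <= (I x).2) /\ ((I y).1 <= t <= (I y).2).
Proof. by case: IR => _ _ H; apply: H. Qed.

Lemma notleaf p y : le p y -> p != y -> ~ is_leaf le p.
Proof. by move=> lpy npy L; move: (L _ lpy) => E; rewrite E eqxx in npy. Qed.

Lemma f_le x : f x <= (I x).1.
Proof.
rewrite /f_clean; case: ifP => _ //.
elim/big_rec: _ => // i z _ Hz; by rewrite ge_min Hz orbT.
Qed.

Lemma f_nonleaf x : ~ is_leaf le x -> f x = (I x).1.
Proof. by move=> H; rewrite /f_clean; case: asboolP. Qed.

Lemma I1_anti a b : le a b -> (I b).1 <= (I a).1.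
Proof.
move=> lab; case: (eqVneq a b) => [->//|nab].
have := rankI (x:=a) (y:=b); rewrite /tlt lab nab => /(_ isT) H.
exact: le_trans (I12 b) (ltW H).
Qed.

Lemma f_anti a b : le a b -> f b <= f a.
Proof.
move=> lab; case: (eqVneq a b) => [->//|nab].
rewrite (f_nonleaf (notleaf lab nab)).
exact: le_trans (f_le b) (I1_anti lab).
Qed.

Lemma g_mono a b : f a <= f b -> (g a <= g b)%N.
Proof.
move=> H; rewrite /g_clean; apply: uniq_leq_size; first exact: undup_uniq.
move=> z; rewrite !mem_undup => /mapP [y]; rewrite mem_filter => /andP [Hy Hy'] ->.
apply/mapP; exists y => //; rewrite mem_filter Hy' andbT; exact: le_trans Hy H.
Qed.

Lemma g_strict a b : f a < f b -> (g a < g b)%N.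
Proof.
move=> H; rewrite /g_clean.
have -> : (size (undup [seq f y | y <- enum T & f y <= f a])).+1 =
   size (f b :: undup [seq f y | y <- enum T & f y <= f a]) by [].
apply: uniq_leq_size.
  rewrite /= undup_uniq andbT mem_undup; apply/negP => /mapP [y].
  rewrite mem_filter => /andP [Hy _] E; rewrite E in H.
  by move: (lt_le_trans H Hy); rewrite ltxx.
move=> z; rewrite inE !mem_undup => /orP [/eqP ->|].
  by apply/mapP; exists b => //; rewrite mem_filter lexx mem_enum.
move=> /mapP [y]; rewrite mem_filter => /andP [Hy Hy'] ->.
apply/mapP; exists y => //; rewrite mem_filter Hy' andbT; exact: le_trans Hy (ltW H).
Qed.

Lemma seq_min (F : T -> R) (s : seq T) : s != [::] ->
  exists2 b, b \in s & forall y, y \in s -> F b <= F y.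
Proof.
elim: s => // a s IH _; case: (eqVneq s [::]) => [->|ns].
  by exists a; rewrite ?inE // => y; rewrite inE => /eqP ->.
have [b bs Hb] := IH ns.
case: (leP (F a) (F b)) => H.
  exists a; rewrite ?inE ?eqxx // => y; rewrite inE => /orP [/eqP ->//|ys].
  exact: le_trans H (Hb _ ys).
exists b; first by rewrite inE bs orbT.
move=> y; rewrite inE => /orP [/eqP ->|ys]; [exact: ltW | exact: Hb].
Qed.

Lemma exists_min (P : pred T) (F : T -> R) x0 : P x0 ->
  exists b, P b /\ forall y, P y -> F b <= F y.
Proof.
move=> Px0; have : [seq y <- enum T | P y] != [::].
  apply/eqP => E; have : x0 \in [seq y <- enum T | P y] by rewrite mem_filter Px0 mem_enum.
  by rewrite E.
case/(seq_min F) => b; rewrite mem_filter => /andP [Pb _] Hb.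
exists b; split => // y Py; apply: Hb; by rewrite mem_filter Py mem_enum.
Qed.

Lemma parent_exists x : ~ is_root le x -> exists p, is_parent le p x.
Proof.
move=> nr; have [rt Hrt] := rootE.
have rx : tlt le rt x.
  rewrite /tlt Hrt /=; apply/eqP => E; apply: nr; by rewrite -E.
have [b [Hb Hmin]] := exists_min (P:=fun p => tlt le p x) (fun p => (I p).1) rx.
exists b; split => // y Hy.
move: (Hy) (Hb); rewrite /tlt => /andP [ly _] /andP [lb _].
case: (leChain ly lb) => // lby.
case: (eqVneq b y) => [->|nby]; first exact: leR.
have := rankI (x:=b) (y:=y); rewrite /tlt lby nby => /(_ isT) H.
have := Hmin _ Hy; move: (lt_le_trans (le_lt_trans (I12 y) H) (lexx _)) => H1 H2.
by move: (lt_le_trans H1 H2); rewrite ltxx.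
Qed.

Lemma C1 x : (C x).1 = (g x)%:R.
Proof. by rewrite /cleaning; case: parent_of. Qed.

Lemma parent_ofP x : (exists p, parent_of le x = Some p /\ is_parent le p x)
   \/ (parent_of le x = None /\ is_root le x).
Proof.
rewrite /parent_of; case: pickP => [p /asboolP Hp|H]; first by left; exists p.
right; split => //; case: (pselect (is_root le x)) => // nr.
have [p Hp] := parent_exists nr; move: (H p) => /asboolP; by [].
Qed.

Lemma parent_tlt p x : is_parent le p x -> tlt le p x.
Proof. by case. Qed.

Lemma parent_notleaf p x : is_parent le p x -> ~ is_leaf le p.
Proof. by move=> /parent_tlt /andP [H1 H2]; apply: notleaf H1 H2. Qed.

Section Tau.
Variables (tau : R) (b : T).
Hypothesis Hb : tau < (g b)%:R.
Hypothesis Hmin : forall z, tau < (g z)%:R -> f b <= f z.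

Lemma cut_lt v : (g v)%:R <= tau -> f v < f b.
Proof.
move=> Hv; rewrite ltNge; apply/negP => H.
have := g_mono H; rewrite -(ler_nat R) => H'.
by move: (lt_le_trans Hb (le_trans H' Hv)); rewrite ltxx.
Qed.

Lemma lowC y : (C y).2 <= tau -> (I y).2 < f b.
Proof.
case: (parent_ofP y) => [[p [E Hp]]|[E Hr]]; rewrite /cleaning E /=.
  move=> Hle.
  have fp : f p <= f b.
    rewrite leNgt; apply/negP => H; have H' := g_strict H.
    have : (g b)%:R + 1 <= (g p)%:R :> R by rewrite natr1 ler_nat.
    move=> H2; have : (g b)%:R <= tau.
      by rewrite -(lerD2r 1); apply: le_trans H2 _; rewrite -lerBlDr.
    by rewrite leNgt Hb.
  rewrite (f_nonleaf (parent_notleaf Hp)) in fp.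
  exact: lt_le_trans (rankI (parent_tlt Hp)) fp.
move=> Hle; have := f_anti (Hr b) => H; have := g_mono H.
rewrite -(ler_nat R) => H'.
by move: (lt_le_trans Hb (le_trans H' Hle)); rewrite ltxx.
Qed.


Lemma stepC n u v i : merge_walk le S2 C tau n u v -> (1 <= i <= n)%N ->
  [/\ (I (u i)).1 < f b, (I (v i)).1 < f b & ((I (u i)).2 < f b \/ (I (v i)).2 < f b)].
Proof.
case=> _ _ _ Hs _ Hi; have [HS Hcap] := Hs i Hi.
have [t [/andP [a1 a2] /andP [b1 b2]]] := S_meet HS.
rewrite /capmax ge_min in Hcap; case/orP: Hcap => /lowC H.
  have hu := le_lt_trans (I12 (u i)) H.
  split => //; last by left.
  exact: le_lt_trans (le_trans a1 b2) H.
have hv := le_lt_trans (I12 (v i)) H.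
split => //; last by right.
exact: le_lt_trans (le_trans b1 a2) H.
Qed.

Lemma endC n u v : merge_walk le S2 C tau n u v ->
  (n = 0%N -> (I (u 0%N)).1 < f b) -> (I (v n.+1)).1 < f b.
Proof.
move=> W H0; case: (W) => _ _ Hc _ [He _].
rewrite C1 in He; have fv := cut_lt He.
case: (pselect (is_leaf le (v n.+1))) => L; last by rewrite -(f_nonleaf L).
have lu : le (u n) (v n.+1).
  have := Hc n.+1; rewrite /= ltnSn => /(_ isT) /orP [//|H].
  by rewrite (L _ H); apply: leR.
apply: le_lt_trans (I1_anti lu) _.
case: n W H0 lu {He Hc fv L} => [|n] W H0 lu; first exact: H0.
by case: (stepC W (i := n.+1)); rewrite ?leqnn.
Qed.

Lemma badC n u v x : merge_walk le S2 C tau n u v -> u 0%N = x -> is_leaf le x ->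
  f b <= (I x).1 -> n = 0%N /\ le (v 1%N) x.
Proof.
move=> W ux Lx Hx; case: (W) => _ _ Hc _ _.
have lv : le (v 1%N) x.
  have := Hc 1%N; rewrite ux /= => /(_ isT) /orP [H|//].
  by rewrite (Lx _ H); apply: leR.
split => //; case: n W Hc => // n W Hc.
case: (stepC W (i := 1%N)) => // _ H _.
have := le_lt_trans (I1_anti lv) H; by rewrite ltNge Hx.
Qed.

Lemma uniq1 a a' p' : le a a' -> (g a)%:R <= tau -> is_parent le p' a' ->
  tau < (g p')%:R -> a = a'.
Proof.
move=> laa ga [_ Hp'] gp; case: (eqVneq a a') => // naa.
have lap : le a p' by apply: Hp'; rewrite /tlt laa naa.
have := g_mono (f_anti lap); rewrite -(ler_nat R) => H.
by move: (lt_le_trans gp (le_trans H ga)); rewrite ltxx.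
Qed.

End Tau.

Lemma seq_max_below (s : seq R) h x0 : x0 < h ->
  exists t, [/\ x0 <= t, t < h & forall a, a \in s -> a < h -> a <= t].
Proof.
move=> xh; elim: s => [|a s [t [H1 H2 H3]]]; first by exists x0; split.
case: (ltP a h) => ah.
  exists (Num.max a t); split.
  - by rewrite le_max H1 orbT.
  - by rewrite gt_max ah H2.
  - move=> c; rewrite inE => /orP [/eqP -> _|cs ch]; first by rewrite le_max lexx.
    by rewrite le_max (H3 _ cs ch) orbT.
exists t; split => // c; rewrite inE => /orP [/eqP -> H|cs ch]; last exact: H3.
by move: (le_lt_trans ah H); rewrite ltxx.
Qed.

Lemma key r tau x rt : is_leaf le x -> is_root le rt -> tau < (C rt).1 ->
  (0 < #|MWReach le S2 r C x tau|)%N ->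
  exists tau' x', [/\ is_leaf le x', (exists rt, is_root le rt /\ tau' < (I rt).1)
    & (#|MWReach le S2 r C x tau| <= #|MWReach le S2 r I x' tau'|)%N].
Proof.
move=> Lx Hrt; rewrite C1 => Hlt /card_gt0P [w].
rewrite inE => /asboolP [n [u [v [nr [u0 [W vw]]]]]].
have [b [Hb Hmin]] := exists_min (P := fun z => tau < (g z)%:R) f Hlt.
case: (ltP (I x).1 (f b)) => Hx.
  have [t [_ tb Ht]] := seq_max_below ([seq (I y).1 | y <- enum T] ++ [seq (I y).2 | y <- enum T]) Hx.
  have Ht1 y : (I y).1 < f b -> (I y).1 <= t.
    by apply: Ht; rewrite mem_cat; apply/orP; left; apply/mapP; exists y; rewrite ?mem_enum.
  have Ht2 y : (I y).2 < f b -> (I y).2 <= t.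
    by apply: Ht; rewrite mem_cat; apply/orP; right; apply/mapP; exists y; rewrite ?mem_enum.
  exists t, x; split => //.
    exists rt; split => //; apply: lt_le_trans tb (le_trans (Hmin _ Hlt) (f_le rt)).
  apply: subset_leq_card; apply/subsetP => w'.
  rewrite !inE => /asboolP [n' [u' [v' [nr' [u0' [W' vw']]]]]].
  apply/asboolP; exists n', u', v'; split => //; split => //; split => //.
  case: (W') => _ Lu Hc Hs [He [p [Hp Hpt]]]; split => //.
  - exists rt; split => //; apply: lt_le_trans tb (le_trans (Hmin _ Hlt) (f_le rt)).
  - move=> i Hi; have [HS _] := Hs i Hi; split => //.
    have [_ _ [H|H]] := stepC Hb W' Hi; rewrite /capmax ge_min.
      by rewrite (Ht2 _ H).
    by rewrite (Ht2 _ H) orbT.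
  - split.
      apply: Ht1; apply: (endC Hb W') => _; by rewrite u0'.
    exists p; split => //; rewrite C1 in Hpt.
    exact: lt_le_trans tb (le_trans (Hmin _ Hpt) (f_le p)).
have [n0 lvx] := badC Hb W u0 Lx Hx.
subst n; case: (W) => _ _ _ _ [He [p [Hp Hpt]]].
rewrite vw C1 in He Hp Hpt; rewrite vw in lvx.
have wrt : tlt le rt w.
  rewrite /tlt Hrt /=; apply/eqP => E; case: (Hp) => /andP [lpw npw] _.
  move: npw; rewrite (leA lpw _) ?eqxx // -E; exact: Hrt.
exists (I w).1, x; split => //.
  exists rt; split => //; exact: le_lt_trans (I12 w) (rankI wrt).
have -> : MWReach le S2 r C x tau = [set w].
  apply/eqP; rewrite eqEsubset; apply/andP; split; last first.
    by apply/subsetP => z; rewrite inE => /eqP ->; rewrite inE; apply/asboolP;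
      exists 0%N, u, v; rewrite vw.
  apply/subsetP => w'; rewrite !inE => /asboolP [n' [u' [v' [nr' [u0' [W' vw']]]]]].
  have [n0' lvx'] := badC Hb W' u0' Lx Hx; subst n'.
  case: (W') => _ _ _ _ [He' [p' [Hp' Hpt']]].
  rewrite vw' C1 in He' Hp' Hpt'; rewrite vw' in lvx'.
  apply/eqP; rewrite C1 in Hpt; rewrite C1 in Hpt'; case: (leChain lvx' lvx) => H.
    exact: uniq1 H He' Hp Hpt.
  by apply: esym; exact: (uniq1 H He Hp' Hpt').
rewrite cards1 card_gt0; apply/set0Pn; exists w; rewrite inE; apply/asboolP.
exists 0%N, (fun _ => x), (fun _ => w); do 3 (split => //); split => //.
- exists rt; split => //; exact: le_lt_trans (I12 w) (rankI wrt).
- by move=> i _; rewrite lvx orbT.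
- by move=> i /andP [H1 H2]; move: (leq_trans H1 H2).
- split => //; exists p; split => //; exact: le_lt_trans (I12 w) (rankI (parent_tlt Hp)).
Qed.

End Aux.

Theorem lemma5p5 (R : realType) (T Sig : finType) (le : rel T)
  (S2 : Sig -> bool -> rel T) (I : T -> R * R) :
  merge_model le S2 -> interval_ranking le S2 I ->
  forall r : nat, (0 < r)%N ->
  (w_r le S2 r (cleaning le I) <= w_r le S2 r I)%N.
Proof.
move=> MM IR r _; rewrite {1}/w_r; apply/bigmax_leqP => k /asboolP.
move=> [tau [x [Lx [[rt [Hrt Hlt]] Hk]]]].
case: (posnP #|MWReach le S2 r (cleaning le I) x tau|) => [E|pos].
  by rewrite -Hk E.
have [tau' [x' [Lx' Hrt' Hc]]] := key MM IR Lx Hrt Hlt pos.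
have Hord : (#|MWReach le S2 r I x' tau'| < #|T|.+1)%N by rewrite ltnS max_card.
apply: leq_trans (_ : (nat_of_ord (Ordinal Hord) <= _)%N).
  by rewrite -Hk.
apply: (leq_bigmax_cond (F := fun i : 'I_#|T|.+1 => nat_of_ord i)).
by apply/asboolP; exists tau', x'.
Qed.
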